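(* Let $\rho:\Gamma\to\mathrm{Homeo}^+(S^1)$ be a minimal action of a group $\Gamma$, and let $\varphi:S^1\to S^1$ be a non-constant continuous map and $\rho_0:\Gamma\to\mathrm{Homeo}^+(S^1)$ an action with $\varphi\rho(\gamma)=\rho_0(\gamma)\varphi$ for all $\gamma\in\Gamma$. Then $\deg\varphi\neq0$ and $\varphi$ is surjective.
   Context: Minimal: every orbit of $\rho(\Gamma)$ is dense in $S^1$. *)

(* Defs.v *)
From Stdlib Require Import Reals Lra ZArith.
Open Scope R_scope.

Definition S1 : Type := {p : R * R | Rsqr (fst p) + Rsqr (snd p) = 1}.
Definition pt (z : S1) : R * R := proj1_sig z.

Definition cdist (z w : S1) : R :=
  sqrt (Rsqr (fst (pt z) - fst (pt w)) + Rsqr (snd (pt z) - snd (pt w))).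

Definition circ_continuous (f : S1 -> S1) : Prop :=
  forall z eps, 0 < eps -> exists delta, 0 < delta /\
    forall w, cdist z w < delta -> cdist (f z) (f w) < eps.

Lemma expc_proof (x : R) :
  Rsqr (cos (2 * PI * x)) + Rsqr (sin (2 * PI * x)) = 1.
Proof. rewrite Rplus_comm; apply sin2_cos2. Qed.

Definition expc (x : R) : S1 :=
  exist _ (cos (2 * PI * x), sin (2 * PI * x)) (expc_proof x).

Definition has_degree (f : S1 -> S1) (d : Z) : Prop :=
  exists F : R -> R, continuity F /\
    (forall x, f (expc x) = expc (F x)) /\
    (forall x, F (x + 1) = F x + IZR d).

Definition circ_homeo (f : S1 -> S1) : Prop :=
  circ_continuous f /\ exists g : S1 -> S1, circ_continuous g /\
    (forall z, g (f z) = z) /\ (forall z, f (g z) = z).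

(* Homeo^+(S^1): orientation-preserving homeomorphisms (degree 1). *)
Definition homeo_plus (f : S1 -> S1) : Prop := circ_homeo f /\ has_degree f 1%Z.

Definition is_group {G : Type} (mul : G -> G -> G) (e : G) (inv : G -> G) : Prop :=
  (forall a b c, mul a (mul b c) = mul (mul a b) c) /\
  (forall a, mul e a = a) /\ (forall a, mul a e = a) /\
  (forall a, mul (inv a) a = e) /\ (forall a, mul a (inv a) = e).

Definition is_action {G : Type} (mul : G -> G -> G) (rho : G -> S1 -> S1) : Prop :=
  (forall g, homeo_plus (rho g)) /\
  (forall g h z, rho (mul g h) z = rho g (rho h z)).

Definition minimal_action {G : Type} (rho : G -> S1 -> S1) : Prop :=
  forall z w eps, 0 < eps -> exists g, cdist (rho g z) w < eps.

(* Main.v *)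
Require Import Defs.
From Stdlib Require Import Reals ZArith Lra Lia Ranalysis5 ProofIrrelevance.
Open Scope R_scope.

Lemma cpt_elim f x: continuity_pt f x -> forall eps, 0<eps ->
  exists d, 0<d /\ forall y, Rabs(y-x)<d -> Rabs(f y - f x) < eps.
Proof.
  intros H eps He; destruct (H eps He) as [d [Hd Hy]]; exists d; split; auto.
  intros y Hyx; destruct (Req_dec y x) as [->|Hne].
  - unfold Rminus; rewrite Rplus_opp_r, Rabs_R0; lra.
  - apply (Hy y); split; [unfold D_x, no_cond; auto | simpl; unfold R_dist; auto].
Qed.

Lemma cpt_intro f x: (forall eps, 0<eps ->
  exists d, 0<d /\ forall y, Rabs(y-x)<d -> Rabs(f y - f x) < eps) -> continuity_pt f x.
Proof.
  intros H eps He; destruct (H eps He) as [d [Hd Hy]]; exists d; split; auto.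
  intros y [_ Hyx]; simpl in *; unfold R_dist in *; auto.
Qed.

Lemma cont_loc f g x a: 0<a -> (forall y, Rabs(y-x)<a -> f y = g y) ->
  continuity_pt f x -> continuity_pt g x.
Proof.
  intros Ha Heq Hf; apply cpt_intro; intros eps He.
  destruct (cpt_elim f x Hf eps He) as [d [Hd Hy]].
  exists (Rmin d a); split; [apply Rmin_pos; auto|].
  intros y Hyx. rewrite <- (Heq y), <- (Heq x).
  - apply Hy. pose (Rmin_l d a); lra.
  - unfold Rminus; rewrite Rplus_opp_r, Rabs_R0; lra.
  - pose (Rmin_r d a); lra.
Qed.

Definition c1 (z:S1) := fst (pt z).
Definition c2 (z:S1) := snd (pt z).
Lemma norm1 z : c1 z * c1 z + c2 z * c2 z = 1.
Proof. destruct z as [[a b] H]; unfold c1,c2,pt; simpl; unfold Rsqr in H; exact H. Qed.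
Lemma S1_eq z w : c1 z = c1 w -> c2 z = c2 w -> z = w.
Proof.
  destruct z as [[a b] H], w as [[a' b'] H']; unfold c1,c2,pt; simpl; intros -> ->.
  f_equal; apply proof_irrelevance.
Qed.

Lemma cdist_eq z w : cdist z w = sqrt ((c1 z - c1 w)² + (c2 z - c2 w)²).
Proof. reflexivity. Qed.

Lemma cdist_ge1 z w : Rabs (c1 z - c1 w) <= cdist z w.
Proof. rewrite cdist_eq, <- sqrt_Rsqr_abs; apply sqrt_le_1_alt; pose proof (Rle_0_sqr (c2 z - c2 w)); lra. Qed.
Lemma cdist_ge2 z w : Rabs (c2 z - c2 w) <= cdist z w.
Proof. rewrite cdist_eq, <- sqrt_Rsqr_abs; apply sqrt_le_1_alt; pose proof (Rle_0_sqr (c1 z - c1 w)); lra. Qed.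
Lemma cdist_le z w : cdist z w <= Rabs (c1 z - c1 w) + Rabs (c2 z - c2 w).
Proof.
  rewrite cdist_eq. rewrite <- (sqrt_Rsqr (Rabs (c1 z - c1 w) + Rabs (c2 z - c2 w))).
  2:{ pose proof (Rabs_pos (c1 z - c1 w)); pose proof (Rabs_pos (c2 z - c2 w)); lra. }
  apply sqrt_le_1_alt. rewrite (Rsqr_abs (c1 z - c1 w)), (Rsqr_abs (c2 z - c2 w)).
  pose proof (Rabs_pos (c1 z - c1 w)); pose proof (Rabs_pos (c2 z - c2 w)).
  unfold Rsqr; nra.
Qed.
Lemma cdist_sym z w : cdist z w = cdist w z.
Proof. rewrite !cdist_eq. f_equal. unfold Rsqr; ring. Qed.

Definition dot z w := c1 z * c1 w + c2 z * c2 w.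
Definition crs z w := c1 z * c2 w - c2 z * c1 w.
Lemma dot_diff z w : dot z w = 1 - ((c1 z - c1 w)² + (c2 z - c2 w)²)/2.
Proof. unfold dot, Rsqr; pose proof (norm1 z); pose proof (norm1 w); nra. Qed.
Lemma dot_cdist z w : dot z w = 1 - (cdist z w)² / 2.
Proof.
  rewrite dot_diff, cdist_eq, Rsqr_sqrt; auto.
  pose proof (Rle_0_sqr (c1 z - c1 w)); pose proof (Rle_0_sqr (c2 z - c2 w)); lra.
Qed.
Lemma dot_crs z w : dot z w * dot z w + crs z w * crs z w = 1.
Proof. unfold dot, crs. pose proof (norm1 z); pose proof (norm1 w). nra. Qed.

Lemma c1_expc x : c1 (expc x) = cos (2*PI*x). Proof. reflexivity. Qed.
Lemma c2_expc x : c2 (expc x) = sin (2*PI*x). Proof. reflexivity. Qed.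

Lemma shift_nat (A:Type) (h:R->A) : (forall x, h (x+1) = h x) ->
  forall n x, h (x + INR n) = h x.
Proof.
  intros H n; induction n as [|n IH]; intros x.
  - simpl; rewrite Rplus_0_r; auto.
  - rewrite S_INR, <- Rplus_assoc, H; auto.
Qed.
Lemma shift_Z (A:Type) (h:R->A) : (forall x, h (x+1) = h x) ->
  forall k x, h (x + IZR k) = h x.
Proof.
  intros H k x. destruct (Z_le_gt_dec 0 k) as [Hk|Hk].
  - rewrite <- (Z2Nat.id k) by lia. rewrite <- INR_IZR_INZ. apply shift_nat; auto.
  - replace k with (- Z.of_nat (Z.to_nat (-k)))%Z by lia.
    rewrite opp_IZR, <- INR_IZR_INZ.
    rewrite <- (shift_nat A h H (Z.to_nat (-k)) (x + - INR (Z.to_nat (-k)))).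
    f_equal; ring.
Qed.

Lemma expc_1 x : expc (x+1) = expc x.
Proof.
  apply S1_eq; rewrite ?c1_expc, ?c2_expc;
  replace (2*PI*(x+1)) with (2*PI*x + 2 * INR 1 * PI) by (simpl; ring).
  apply cos_period. apply sin_period.
Qed.
Lemma expc_Z k x : expc (x + IZR k) = expc x.
Proof. apply shift_Z, expc_1. Qed.

Lemma expc_inj u v : expc u = expc v -> exists k, u = v + IZR k.
Proof.
  intros H.
  assert (Hc : cos (2*PI*u) = cos (2*PI*v)) by (rewrite <- !c1_expc, H; auto).
  assert (Hs : sin (2*PI*u) = sin (2*PI*v)) by (rewrite <- !c2_expc, H; auto).
  assert (H1 : cos (2 * (PI*(u-v))) = 1).
  { replace (2*(PI*(u-v))) with (2*PI*u - 2*PI*v) by ring.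
    rewrite cos_minus, Hc, Hs. rewrite <- (norm1 (expc v)), c1_expc, c2_expc. ring. }
  rewrite cos_2a_sin in H1.
  assert (H2 : sin (PI*(u-v)) = 0) by nra.
  destruct (sin_eq_0_0 _ H2) as [k Hk]. exists k.
  pose proof PI_RGT_0.
  assert (u - v = IZR k).
  { apply (Rmult_eq_reg_l PI); [|lra]. rewrite Hk; ring. }
  lra.
Qed.

Lemma expc_surj z : exists a, expc a = z.
Proof.
  pose proof (norm1 z) as N. pose proof PI_RGT_0.
  assert (Hb : -1 <= c1 z <= 1) by nra.
  assert (Hs : sqrt (1 - (c1 z)²) = Rabs (c2 z)).
  { rewrite <- sqrt_Rsqr_abs. f_equal. unfold Rsqr; lra. }
  destruct (Rle_dec 0 (c2 z)) as [Hp|Hn].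
  - exists (acos (c1 z) / (2*PI)). apply S1_eq; rewrite ?c1_expc, ?c2_expc;
    replace (2*PI*(acos (c1 z)/(2*PI))) with (acos (c1 z)) by (field; lra).
    + apply cos_acos; auto.
    + rewrite sin_acos, Hs by auto. apply Rabs_right; lra.
  - exists (- acos (c1 z) / (2*PI)). apply S1_eq; rewrite ?c1_expc, ?c2_expc;
    replace (2*PI*(- acos (c1 z)/(2*PI))) with (- acos (c1 z)) by (field; lra).
    + rewrite cos_neg; apply cos_acos; auto.
    + rewrite sin_neg, sin_acos, Hs by auto. rewrite Rabs_left; lra.
Qed.

Definition ang z w := atan (crs z w / dot z w) / (2*PI).

Lemma rot t z w : 0 < dot z w -> expc t = z -> expc (t + ang z w) = w.
Proof.
  intros Hd Ht. pose proof PI_RGT_0.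
  set (d := dot z w) in *. set (c := crs z w).
  assert (Hdc : d*d + c*c = 1) by apply dot_crs.
  assert (Hsq : sqrt (1 + (c/d)²) = 1/d).
  { replace (1 + (c/d)²) with ((d*d + c*c)/(d*d)) by (unfold Rsqr; field; lra).
    rewrite Hdc. replace (1/(d*d)) with ((1/d)²) by (unfold Rsqr; field; lra).
    apply sqrt_Rsqr. apply Rlt_le, Rdiv_lt_0_compat; lra. }
  assert (Hcos : cos (atan (c/d)) = d) by (rewrite cos_atan, Hsq; field; lra).
  assert (Hsin : sin (atan (c/d)) = c) by (rewrite sin_atan, Hsq; field; lra).
  assert (E : 2*PI*(t + ang z w) = 2*PI*t + atan (c/d)) by (unfold ang; fold d c; field; lra).
  assert (Z1 : c1 z = cos (2*PI*t)) by (rewrite <- Ht; auto).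
  assert (Z2 : c2 z = sin (2*PI*t)) by (rewrite <- Ht; auto).
  pose proof (norm1 z) as Nz.
  apply S1_eq; rewrite ?c1_expc, ?c2_expc, E.
  - rewrite cos_plus, Hcos, Hsin, <- Z1, <- Z2. unfold d, c, dot, crs.
    transitivity (c1 w * (c1 z*c1 z + c2 z * c2 z)); [ring | rewrite Nz; ring].
  - rewrite sin_plus, Hcos, Hsin, <- Z1, <- Z2. unfold d, c, dot, crs.
    transitivity (c2 w * (c1 z*c1 z + c2 z * c2 z)); [ring | rewrite Nz; ring].
Qed.

Lemma ang_refl z : ang z z = 0.
Proof.
  unfold ang. replace (crs z z) with 0 by (unfold crs; ring).
  replace (0 / dot z z) with 0 by (unfold Rdiv; ring). rewrite atan_0. unfold Rdiv; ring.
Qed.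

Lemma ivt f a b v : a <= b -> (forall s, a<=s<=b -> continuity_pt f s) ->
  (f a <= v <= f b \/ f b <= v <= f a) -> exists c, a<=c<=b /\ f c = v.
Proof.
  intros Hab Hc Hv.
  destruct (Req_dec (f a) v) as [E|Ea]; [exists a; split; [lra|auto]|].
  destruct (Req_dec (f b) v) as [E|Eb]; [exists b; split; [lra|auto]|].
  destruct (Req_dec a b) as [->|Hne]; [lra|].
  destruct Hv as [Hv|Hv].
  - destruct (IVT_interv (fun s => f s - v) a b) as [c [Hc1 Hc2]].
    + intros s Hs. apply continuity_pt_minus; [apply Hc; auto| apply continuity_pt_const; intros ? ?; auto].
    + lra.
    + lra.
    + lra.
    + exists c; split; auto; lra.
  - destruct (IVT_interv (fun s => v - f s) a b) as [c [Hc1 Hc2]].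
    + intros s Hs. apply continuity_pt_minus; [apply continuity_pt_const; intros ? ?; auto| apply Hc; auto].
    + lra.
    + lra.
    + lra.
    + exists c; split; auto; lra.
Qed.

Lemma ivt2 f x y v : (forall s, Rmin x y <= s <= Rmax x y -> continuity_pt f s) ->
  (f x <= v <= f y \/ f y <= v <= f x) -> exists s, Rmin x y <= s <= Rmax x y /\ f s = v.
Proof.
  intros Hc Hv. destruct (Rle_dec x y) as [H|H].
  - rewrite Rmin_left, Rmax_right in * by lra. apply ivt; auto.
  - rewrite Rmin_right, Rmax_left in * by lra. apply ivt; auto; lra.
Qed.

Lemma int_const D c t :
  (forall s, Rmin c t <= s <= Rmax c t -> continuity_pt D s /\ exists k:Z, D s = IZR k) ->
  D t = D c.
Proof.
  intros H.
  assert (Hct : Rmin c t <= c <= Rmax c t) by (split; [apply Rmin_l|apply Rmax_l]).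
  assert (Htt : Rmin c t <= t <= Rmax c t) by (split; [apply Rmin_r|apply Rmax_r]).
  destruct (H c Hct) as [_ [kc Hkc]]. destruct (H t Htt) as [_ [kt Hkt]].
  destruct (Z.eq_dec kc kt) as [->|Hne]; [congruence|].
  assert (Hcont : forall s, Rmin c t <= s <= Rmax c t -> continuity_pt D s) by (intros s Hs; apply H; auto).
  destruct (Z_lt_le_dec kc kt) as [Hl|Hl].
  - assert (IZR kc + 1 <= IZR kt) by (rewrite <- plus_IZR; apply IZR_le; lia).
    destruct (ivt2 D c t (IZR kc + 1/2) Hcont) as [s [Hs Ds]]; [lra|].
    destruct (H s Hs) as [_ [k Hk]].
    assert (IZR (2*(k - kc)) = IZR 1) by (rewrite mult_IZR, minus_IZR; simpl; lra).
    apply eq_IZR in H1. lia.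
  - assert (IZR kt + 1 <= IZR kc) by (rewrite <- plus_IZR; apply IZR_le; lia).
    destruct (ivt2 D c t (IZR kc - 1/2) Hcont) as [s [Hs Ds]]; [lra|].
    destruct (H s Hs) as [_ [k Hk]].
    assert (IZR (2*(kc - k)) = IZR 1) by (rewrite mult_IZR, minus_IZR; simpl; lra).
    apply eq_IZR in H1. lia.
Qed.

Lemma lift_uniq L1 L2 c t :
  (forall s, Rmin c t <= s <= Rmax c t ->
     continuity_pt L1 s /\ continuity_pt L2 s /\ expc (L1 s) = expc (L2 s)) ->
  L1 c = L2 c -> L1 t = L2 t.
Proof.
  intros H Hc.
  assert (E : (fun s => L1 s - L2 s) t = (fun s => L1 s - L2 s) c).
  { apply (int_const (fun s => L1 s - L2 s)). intros s Hs. destruct (H s Hs) as [H1 [H2 H3]]. split.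
    - apply continuity_pt_minus; auto.
    - destruct (expc_inj _ _ H3) as [k Hk]. exists k. lra. }
  simpl in E. lra.
Qed.

Lemma add_shift H c : (forall x, H (x+1) = H x + c) ->
  forall k x, H (x + IZR k) = H x + IZR k * c.
Proof.
  intros HH k x.
  pose proof (shift_Z R (fun x => H x - x * c)) as S.
  simpl in S. assert (E := S (fun y => ltac:(rewrite HH; ring)) k x).
  lra.
Qed.

Lemma lift_mono R0 (h: S1->S1) : continuity R0 -> (forall x, R0 (x+1) = R0 x + IZR 1) ->
  (forall x, h (expc x) = expc (R0 x)) -> (forall z w, h z = h w -> z = w) ->
  forall a b, a <= b -> R0 a <= R0 b.
Proof.
  intros Hc H1 Hl Hinj.
  assert (Hinj' : forall a b, R0 a = R0 b -> a = b).
  { intros a b E. assert (expc a = expc b) by (apply Hinj; rewrite !Hl, E; auto).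
    destruct (expc_inj _ _ H) as [k Hk]. subst a.
    rewrite add_shift with (c := IZR 1) in E by auto.
    assert (IZR k = 0) by nra. lra. }
  intros a b Hab. destruct (Rle_dec (R0 a) (R0 b)) as [|Hn]; auto.
  exfalso. destruct (Req_dec a b) as [->|Hne]; [lra|].
  destruct (archimed (R0 a - R0 b)) as [Hu _].
  set (n := up (R0 a - R0 b)) in *.
  assert (Hb : R0 (b + IZR n) = R0 b + IZR n) by (rewrite add_shift with (c := IZR 1); auto; ring).
  destruct (ivt R0 b (b + IZR n) (R0 a)) as [c [Hc1 Hc2]].
  - lra.
  - intros; apply Hc.
  - left; lra.
  - apply Hinj' in Hc2. lra.
Qed.

Lemma cpt_minus f h x : continuity_pt f x -> continuity_pt h x -> continuity_pt (fun t => f t - h t) x.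
Proof. intros; exact (continuity_pt_minus f h x H H0). Qed.
Lemma cpt_plus f h x : continuity_pt f x -> continuity_pt h x -> continuity_pt (fun t => f t + h t) x.
Proof. intros; exact (continuity_pt_plus f h x H H0). Qed.
Lemma cpt_mult f h x : continuity_pt f x -> continuity_pt h x -> continuity_pt (fun t => f t * h t) x.
Proof. intros; exact (continuity_pt_mult f h x H H0). Qed.
Lemma cpt_div f h x : continuity_pt f x -> continuity_pt h x -> h x <> 0 -> continuity_pt (fun t => f t / h t) x.
Proof. intros; exact (continuity_pt_div f h x H H0 H1). Qed.
Lemma cpt_atan f x : continuity_pt f x -> continuity_pt (fun t => atan (f t) / (2*PI)) x.
Proof.
  intros H. apply (continuity_pt_comp f (fun u => atan u / (2*PI)) x H).
  apply derivable_continuous_pt. reg. apply derivable_pt_atan.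
Qed.

Section Lift.
Variable g : R -> S1.
Hypothesis Hg1 : forall x, continuity_pt (fun t => c1 (g t)) x.
Hypothesis Hg2 : forall x, continuity_pt (fun t => c2 (g t)) x.
Hypothesis Hper : forall x, g (x+1) = g x.

Lemma unif : exists del, 0<del /\ forall x y, Rabs(x-y) < del -> 0 < dot (g x) (g y).
Proof.
  destruct (Heine (fun t => c1 (g t)) (fun c => -1 <= c <= 2) (compact_P3 _ _)
     (fun x _ => Hg1 x) (mkposreal (1/2) ltac:(lra))) as [d1 H1].
  destruct (Heine (fun t => c2 (g t)) (fun c => -1 <= c <= 2) (compact_P3 _ _)
     (fun x _ => Hg2 x) (mkposreal (1/2) ltac:(lra))) as [d2 H2].
  pose proof (cond_pos d1). pose proof (cond_pos d2).
  exists (Rmin (Rmin d1 d2) 1). split; [repeat apply Rmin_pos; lra|].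
  intros x y Hxy.
  pose proof (Rmin_l (Rmin d1 d2) 1). pose proof (Rmin_r (Rmin d1 d2) 1).
  pose proof (Rmin_l d1 d2). pose proof (Rmin_r d1 d2).
  destruct (base_Int_part x) as [B1 B2].
  rewrite <- (shift_Z _ g Hper (- Int_part x) x), <- (shift_Z _ g Hper (- Int_part x) y).
  rewrite opp_IZR.
  assert (Hd : Rabs ((x + - IZR (Int_part x)) - (y + - IZR (Int_part x))) = Rabs (x - y))
    by (f_equal; ring).
  destruct (Rabs_def2 _ _ Hxy).
  assert (Hx : -1 <= x + - IZR (Int_part x) <= 2) by lra.
  assert (Hy : -1 <= y + - IZR (Int_part x) <= 2) by lra.
  specialize (H1 _ _ Hx Hy ltac:(rewrite Hd; lra)).
  specialize (H2 _ _ Hx Hy ltac:(rewrite Hd; lra)). simpl in H1, H2.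
  apply Rabs_def2 in H1. apply Rabs_def2 in H2.
  rewrite dot_diff. unfold Rsqr. nra.
Qed.

Variable del : R.
Hypothesis Hdel : 0 < del.
Hypothesis Hdot : forall x y, Rabs(x-y) < del -> 0 < dot (g x) (g y).
Variable a : R.
Hypothesis Ha : expc a = g 0.

Definition term N i x := ang (g (INR i / INR N * x)) (g (INR (S i) / INR N * x)).
Fixpoint Ssum N k x := match k with O => 0 | S i => Ssum N i x + term N i x end.

Lemma step N i x : 0 < INR N -> Rabs x < INR N * del ->
  0 < dot (g (INR i / INR N * x)) (g (INR (S i) / INR N * x)).
Proof.
  intros HN Hx. apply Hdot.
  replace (INR i / INR N * x - INR (S i) / INR N * x) with (-(x / INR N)) by (rewrite S_INR; field; lra).
  rewrite Rabs_Ropp. unfold Rdiv. rewrite Rabs_mult, Rabs_inv, (Rabs_right (INR N)) by lra.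
  apply (Rmult_lt_reg_l (INR N)); auto. replace (INR N * (Rabs x * / INR N)) with (Rabs x) by (field; lra).
  lra.
Qed.

Lemma lift_sum N x : 0 < INR N -> Rabs x < INR N * del ->
  forall k, (k <= N)%nat -> expc (a + Ssum N k x) = g (INR k / INR N * x).
Proof.
  intros HN Hx k; induction k as [|k IH]; intros Hk.
  - cbn [Ssum]. replace (INR 0 / INR N * x) with 0 by (simpl; unfold Rdiv; ring).
    rewrite Rplus_0_r; auto.
  - cbn [Ssum]. rewrite <- Rplus_assoc. unfold term. apply rot.
    + apply step; auto.
    + apply IH; lia.
Qed.

Lemma cg1 r x : continuity_pt (fun t => c1 (g (r * t))) x.
Proof.
  apply (continuity_pt_comp (fun t => r * t) (fun t => c1 (g t)) x); [reg| apply Hg1].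
Qed.
Lemma cg2 r x : continuity_pt (fun t => c2 (g (r * t))) x.
Proof.
  apply (continuity_pt_comp (fun t => r * t) (fun t => c2 (g t)) x); [reg| apply Hg2].
Qed.

Lemma term_cont N i x : 0 < INR N -> Rabs x < INR N * del -> continuity_pt (term N i) x.
Proof.
  intros HN Hx. unfold term, ang.
  apply cpt_atan. apply cpt_div.
  - unfold crs. apply cpt_minus; apply cpt_mult; (apply cg1 || apply cg2).
  - unfold dot. apply cpt_plus; apply cpt_mult; (apply cg1 || apply cg2).
  - pose proof (step N i x HN Hx). unfold dot in *. lra.
Qed.

Lemma Ssum_cont N x : 0 < INR N -> Rabs x < INR N * del -> forall k, continuity_pt (Ssum N k) x.
Proof.
  intros HN Hx k; induction k as [|k IH].
  - cbn [Ssum]. apply continuity_pt_const. intros ? ?; auto.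
  - cbn [Ssum]. apply cpt_plus; auto. apply term_cont; auto.
Qed.

Lemma Ssum_0 N k : Ssum N k 0 = 0.
Proof.
  induction k as [|k IH]; cbn [Ssum]; auto.
  rewrite IH. unfold term. rewrite !Rmult_0_r, ang_refl. ring.
Qed.

Lemma Ssum_indep N M x : 0 < INR N -> 0 < INR M -> Rabs x < INR N * del -> Rabs x < INR M * del ->
  Ssum N N x = Ssum M M x.
Proof.
  intros HN HM HxN HxM.
  assert (E : a + Ssum N N x = a + Ssum M M x).
  { apply (lift_uniq (fun s => a + Ssum N N s) (fun s => a + Ssum M M s) 0 x).
    - intros s Hs. assert (Rabs s <= Rabs x).
      { destruct (Rle_dec 0 x).
        + rewrite Rmin_left, Rmax_right in Hs by lra. rewrite !Rabs_right by lra. lra.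
        + rewrite Rmin_right, Rmax_left in Hs by lra. rewrite !Rabs_left1 by lra. lra. }
      split; [|split].
      + apply cpt_plus; [apply continuity_pt_const; intros ? ?; auto| apply Ssum_cont; lra].
      + apply cpt_plus; [apply continuity_pt_const; intros ? ?; auto| apply Ssum_cont; lra].
      + rewrite !lift_sum by (auto; lra). f_equal. field_simplify; auto; lra.
    - simpl. rewrite !Ssum_0. auto. }
  lra.
Qed.

Definition Nx x := S (Z.to_nat (up (Rabs x / del))).

Lemma Nx_spec x : 0 < INR (Nx x) /\ Rabs x < INR (Nx x) * del.
Proof.
  unfold Nx. rewrite S_INR. set (z := up (Rabs x / del)).
  assert (IZR z <= INR (Z.to_nat z)).
  { destruct (Z_le_gt_dec 0 z).
    - rewrite INR_IZR_INZ, Z2Nat.id by lia. lra.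
    - pose proof (pos_INR (Z.to_nat z)). assert (IZR z < 0) by (apply IZR_lt; lia). lra. }
  destruct (archimed (Rabs x / del)) as [A _]. fold z in A.
  pose proof (pos_INR (Z.to_nat z)). pose proof (Rabs_pos x).
  split; [lra|].
  assert (Rabs x = (Rabs x / del) * del) by (field; lra).
  rewrite H2 at 1. apply Rmult_lt_compat_r; lra.
Qed.

Definition Flift x := a + Ssum (Nx x) (Nx x) x.

Lemma Flift_cont : continuity Flift.
Proof.
  intros x. destruct (Nx_spec (Rabs x + 1)) as [HM HxM].
  set (M := Nx (Rabs x + 1)) in *.
  rewrite Rabs_right in HxM by (pose proof (Rabs_pos x); lra).
  apply (cont_loc (fun s => a + Ssum M M s) _ x 1); [lra| |].
  - intros y Hy. unfold Flift. destruct (Nx_spec y) as [Hy1 Hy2]. f_equal.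
    apply Ssum_indep; auto.
    pose proof (Rabs_triang_inv y x). lra.
  - apply cpt_plus; [apply continuity_pt_const; intros ? ?; auto| apply Ssum_cont; auto].
    pose proof (Rabs_pos x); lra.
Qed.

Lemma Flift_lift x : g x = expc (Flift x).
Proof.
  destruct (Nx_spec x) as [H1 H2]. unfold Flift. rewrite lift_sum; auto.
  f_equal. field; lra.
Qed.

End Lift.

Lemma expc_cont x eps : 0 < eps -> exists d, 0 < d /\
  forall y, Rabs (y - x) < d -> cdist (expc x) (expc y) < eps.
Proof.
  intros He.
  assert (Cc : continuity_pt (fun t => cos (2*PI*t)) x) by reg.
  assert (Cs : continuity_pt (fun t => sin (2*PI*t)) x) by reg.
  destruct (cpt_elim _ _ Cc (eps/2)) as [d1 [Hd1 H1]]; [lra|].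
  destruct (cpt_elim _ _ Cs (eps/2)) as [d2 [Hd2 H2]]; [lra|].
  exists (Rmin d1 d2); split; [apply Rmin_pos; auto|].
  intros y Hy. pose proof (Rmin_l d1 d2); pose proof (Rmin_r d1 d2).
  eapply Rle_lt_trans; [apply cdist_le|]. rewrite !c1_expc, !c2_expc.
  rewrite (Rabs_minus_sym (cos _)), (Rabs_minus_sym (sin _)).
  specialize (H1 y ltac:(lra)); specialize (H2 y ltac:(lra)). lra.
Qed.

Lemma gcont1 phi : circ_continuous phi -> forall x, continuity_pt (fun t => c1 (phi (expc t))) x.
Proof.
  intros Hp x. apply cpt_intro. intros eps He.
  destruct (Hp (expc x) eps He) as [d1 [Hd1 H1]].
  destruct (expc_cont x d1 Hd1) as [d [Hd H]]. exists d; split; auto.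
  intros y Hy. rewrite Rabs_minus_sym. eapply Rle_lt_trans; [apply cdist_ge1|]. auto.
Qed.
Lemma gcont2 phi : circ_continuous phi -> forall x, continuity_pt (fun t => c2 (phi (expc t))) x.
Proof.
  intros Hp x. apply cpt_intro. intros eps He.
  destruct (Hp (expc x) eps He) as [d1 [Hd1 H1]].
  destruct (expc_cont x d1 Hd1) as [d [Hd H]]. exists d; split; auto.
  intros y Hy. rewrite Rabs_minus_sym. eapply Rle_lt_trans; [apply cdist_ge2|]. auto.
Qed.

Lemma lift_exists phi : circ_continuous phi -> exists F, continuity F /\
  (forall x, phi (expc x) = expc (F x)) /\ exists d, forall x, F (x+1) = F x + IZR d.
Proof.
  intros Hp. set (g := fun x => phi (expc x)).
  assert (Hper : forall x, g (x+1) = g x) by (intros; unfold g; rewrite expc_1; auto).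
  destruct (unif g (gcont1 phi Hp) (gcont2 phi Hp) Hper) as [del [Hdel Hdot]].
  destruct (expc_surj (g 0)) as [a Ha].
  set (F := Flift g del a).
  assert (Fc : continuity F) by (apply Flift_cont; auto; apply gcont1 || apply gcont2; auto).
  assert (Fc1 : continuity F) by auto.
  assert (Fl : forall x, g x = expc (F x)) by (intros; apply Flift_lift; auto).
  exists F; split; auto; split; [exact Fl|].
  destruct (expc_inj (F (0+1)) (F 0)) as [d Hd].
  { rewrite <- !Fl. apply Hper. }
  exists d. intros x.
  assert (E : F (x+1) - F x = F (0+1) - F 0).
  { apply (int_const (fun s => F (s+1) - F s)). intros s _. split.
    - apply cpt_minus; [|apply Fc].
      apply (continuity_pt_comp (fun t => t + 1) F s); [reg| apply Fc].
    - destruct (expc_inj (F (s+1)) (F s)) as [k Hk]; [rewrite <- !Fl; apply Hper|].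
      exists k; lra. }
  lra.
Qed.

Lemma crs_bound z w : Rabs (crs z w) <= 2 * cdist z w.
Proof.
  pose proof (cdist_ge1 z w); pose proof (cdist_ge2 z w).
  pose proof (norm1 z).
  assert (A1 : Rabs (c1 z) <= 1) by (apply Rabs_le; nra).
  assert (A2 : Rabs (c2 z) <= 1) by (apply Rabs_le; nra).
  replace (crs z w) with (c1 z * (c2 w - c2 z) + - (c2 z * (c1 w - c1 z))) by (unfold crs; ring).
  eapply Rle_trans; [apply Rabs_triang|]. rewrite Rabs_Ropp, !Rabs_mult.
  rewrite (Rabs_minus_sym (c2 w)), (Rabs_minus_sym (c1 w)).
  pose proof (Rabs_pos (c1 z)); pose proof (Rabs_pos (c2 z)).
  pose proof (Rabs_pos (c1 z - c1 w)); pose proof (Rabs_pos (c2 z - c2 w)).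
  nra.
Qed.

Lemma cdist_pos z w : 0 <= cdist z w.
Proof. rewrite cdist_eq; apply sqrt_pos. Qed.

Lemma close_lift y eta : 0 < eta -> exists eps, 0 < eps /\
  forall u, cdist (expc u) (expc y) < eps -> exists j, Rabs (u - IZR j - y) < eta.
Proof.
  intros He. pose proof PI_RGT_0.
  destruct (cpt_elim atan 0 (derivable_continuous_pt _ _ (derivable_pt_atan 0)) (2*PI*eta))
    as [ze [Hze Hz]]; [nra|].
  exists (Rmin 1 (ze/4)); split; [apply Rmin_pos; lra|].
  intros u Hu. pose proof (Rmin_l 1 (ze/4)); pose proof (Rmin_r 1 (ze/4)).
  rewrite cdist_sym in Hu. set (cd := cdist (expc y) (expc u)) in *.
  assert (Hcd : 0 <= cd) by apply cdist_pos.
  set (d := dot (expc y) (expc u)). set (c := crs (expc y) (expc u)).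
  assert (Hd : d > 1/2) by (unfold d; rewrite dot_cdist; fold cd; unfold Rsqr; nra).
  assert (Hc : Rabs c <= 2 * cd) by apply crs_bound.
  pose proof (rot y (expc y) (expc u) ltac:(fold d; lra) eq_refl) as Hr.
  destruct (expc_inj _ _ (eq_sym Hr)) as [j Hj]. exists j.
  replace (u - IZR j - y) with (ang (expc y) (expc u)) by lra.
  unfold ang. fold c d.
  assert (Hcd' : Rabs (c/d - 0) < ze).
  { rewrite Rminus_0_r. unfold Rdiv. rewrite Rabs_mult, Rabs_inv, (Rabs_right d) by lra.
    apply (Rmult_lt_reg_r d); [lra|]. replace (Rabs c * / d * d) with (Rabs c) by (field; lra).
    nra. }
  specialize (Hz _ Hcd'). rewrite atan_0, Rminus_0_r in Hz.
  set (at' := atan (c/d)) in *. unfold Rdiv. rewrite Rabs_mult, Rabs_inv, (Rabs_right (2*PI)) by lra.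
  apply (Rmult_lt_reg_r (2*PI)); [lra|]. replace (Rabs at' * / (2*PI) * (2*PI)) with (Rabs at') by (field; lra).
  lra.
Qed.

Theorem lemma3p8 (G : Type) (mul : G -> G -> G) (e : G) (inv : G -> G)
  (rho rho0 : G -> S1 -> S1) (phi : S1 -> S1) :
  is_group mul e inv ->
  is_action mul rho -> minimal_action rho ->
  is_action mul rho0 ->
  circ_continuous phi ->
  (exists z w, phi z <> phi w) ->
  (forall g z, phi (rho g z) = rho0 g (phi z)) ->
  (exists d : Z, has_degree phi d /\ d <> 0%Z) /\
  (forall w, exists z, phi z = w).
Proof.
  intros _ [Hr _] Hmin [Hr0 _] Hp [z0 [w0 Hzw]] Hsemi.
  destruct (lift_exists phi Hp) as [F [Fc [Fl [d Fd]]]].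
  assert (Hdeg : has_degree phi d) by (exists F; auto).
  assert (Hd0 : d <> 0%Z).
  { intros ->. assert (Fp : forall x, F (x+1) = F x) by (intros; rewrite Fd; simpl; ring).
    destruct (continuity_ab_maj F 0 1) as [x0 [Hmax Hx0]]; [lra| intros; apply Fc|].
    set (M := F x0) in *.
    assert (Hglob : forall y, F y <= M).
    { intros y. destruct (base_Int_part y) as [B1 B2].
      replace y with ((y - IZR (Int_part y)) + IZR (Int_part y)) by ring.
      rewrite (shift_Z R F Fp). apply Hmax; lra. }
    assert (Hy : exists y, F y < M).
    { destruct (expc_surj z0) as [za Hza]; destruct (expc_surj w0) as [wa Hwa].
      destruct (Rlt_dec (F za) M) as [|H1]; [exists za; auto|].
      destruct (Rlt_dec (F wa) M) as [|H2]; [exists wa; auto|].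
      exfalso. apply Hzw. rewrite <- Hza, <- Hwa, !Fl.
      pose proof (Hglob za); pose proof (Hglob wa). f_equal; lra. }
    destruct Hy as [y Hy].
    destruct (cpt_elim F y (Fc y) (M - F y)) as [eta [Heta Hnear]]; [lra|].
    destruct (close_lift y eta Heta) as [eps [Heps Hclose]].
    destruct (Hmin (expc x0) (expc y) eps Heps) as [g Hg].
    destruct (Hr g) as [[_ [gi [_ [_ Hgi]]]] [Rg [Rc [Rl R1]]]].
    destruct (Hr0 g) as [[_ [hi [_ [Hhi _]]]] [R0 [R0c [R0l R01]]]].
    assert (Hinj0 : forall z w, rho0 g z = rho0 g w -> z = w).
    { intros z w E. rewrite <- (Hhi z), <- (Hhi w), E; auto. }
    assert (Hmono := lift_mono R0 (rho0 g) R0c R01 R0l Hinj0).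
    assert (HK : forall x, F (Rg x) - R0 (F x) = F (Rg 0) - R0 (F 0)).
    { intros x. apply (int_const (fun s => F (Rg s) - R0 (F s))). intros s _. split.
      - apply cpt_minus.
        + apply (continuity_pt_comp Rg F s); [apply Rc| apply Fc].
        + apply (continuity_pt_comp F R0 s); [apply Fc| apply R0c].
      - destruct (expc_inj (F (Rg s)) (R0 (F s))) as [k Hk].
        + rewrite <- Fl, <- Rl, Hsemi, Fl, R0l; auto.
        + exists k; lra. }
    set (k := F (Rg 0) - R0 (F 0)) in *.
    destruct (expc_surj (gi (expc x0))) as [y1 Hy1].
    assert (E1 : expc (Rg y1) = expc x0) by (rewrite <- Rl, Hy1, Hgi; auto).
    destruct (expc_inj _ _ E1) as [j Hj].
    assert (FM : F (Rg y1) = M) by (rewrite Hj, (shift_Z R F Fp); auto).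
    assert (HRx0 : F (Rg x0) = M).
    { pose proof (HK y1); pose proof (HK x0).
      pose proof (Hmono (F y1) M (Hglob y1)).
      pose proof (Hglob (Rg x0)). unfold M in *. lra. }
    rewrite Rl in Hg.
    destruct (Hclose (Rg x0) Hg) as [j' Hj'].
    assert (Rabs (Rg x0 - IZR j' - y) < eta) by auto.
    specialize (Hnear (Rg x0 - IZR j') ltac:(auto)).
    replace (Rg x0 - IZR j') with (Rg x0 + IZR (- j')) in Hnear by (rewrite opp_IZR; ring).
    rewrite (shift_Z R F Fp) in Hnear. apply Rabs_def2 in Hnear. lra. }
  split; [exists d; auto|].
  intros w. destruct (expc_surj w) as [b Hb].
  assert (F1 : F 1 = F 0 + IZR d) by (rewrite <- Fd; f_equal; ring).
  destruct (Z_lt_le_dec 0 d) as [Hpos|Hneg].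
  - assert (1 <= IZR d) by (apply IZR_le; lia).
    destruct (archimed (F 0 - b)) as [A1 A2].
    destruct (ivt F 0 1 (b + IZR (up (F 0 - b)))) as [x [Hx Fx]]; [lra| intros; apply Fc| left; lra|].
    exists (expc x). rewrite Fl, Fx, expc_Z; auto.
  - assert (IZR d <= -1) by (apply IZR_le; lia).
    destruct (archimed (F 1 - b)) as [A1 A2].
    destruct (ivt F 0 1 (b + IZR (up (F 1 - b)))) as [x [Hx Fx]]; [lra| intros; apply Fc| right; lra|].
    exists (expc x). rewrite Fl, Fx, expc_Z; auto.
Qed.
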